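(* $$\operatorname{Var}(B)=\frac{N\mu}{(1-q)^2}\cdot\begin{cases}2(N-1)-(1+q)\log N, & \gamma=1,\\[2pt] (1+q)(N^{-1/2}-1)+\log N, & \gamma=2,\\[2pt] \dfrac{2}{2-\gamma}N^{2/\gamma-1}+\dfrac{1+q}{\gamma-1}N^{1/\gamma-1}+\dfrac{q(2-\gamma)+\gamma}{(2-\gamma)(1-\gamma)}, & \gamma\notin\{1,2\}.\end{cases}$$
   Context: Model: fix $\delta>0$, $\nu>0$ and $\alpha>\beta\ge 0$, and put $\lambda=\alpha-\beta>0$. The wild-type population is deterministic, of size $e^{\delta t}$ at time $t\ge0$. Mutants arise at the points of an inhomogeneous Poisson process on $[0,\infty)$ with intensity $\nu e^{\delta t}$. Each mutant arising at time $s$ founds a clone that evolves as a linear birth–death process started from one cell, with per-capita birth rate $\alpha$ and death rate $\beta$. Clones are independent of each other and of the Poisson process. For $N>1$ let $\tau=\log N/\delta$, and let $B$ be the total number of mutant cells alive at time $\tau$. Notation: $q=\beta/\alpha\in[0,1)$, $\gamma=\delta/\lambda$, $\mu=\nu/\alpha$. *)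

(* Defs.v *)
From Stdlib Require Import Reals Lra ClassicalEpsilon Factorial.
Open Scope R_scope.

(* Total Riemann integral: the Riemann integral of f on [a,b] when f is
   Riemann integrable there, 0 otherwise (value independent of the proof). *)
Definition Rint (f : R -> R) (a b : R) : R :=
  match excluded_middle_informative (inhabited (Riemann_integrable f a b)) with
  | left H => RiemannInt (epsilon H (fun _ => True))
  | right _ => 0
  end.

(* Total series: the sum of the series when it converges, 0 otherwise. *)
Definition series (u : nat -> R) : R :=
  match excluded_middle_informative (exists l, infinite_sum u l) with
  | left H => proj1_sig (constructive_indefinite_description _ H)
  | right _ => 0
  end.

(* Law of a linear birth-death process (birth rate alpha, death rate beta,
   alpha > beta) started from one cell: P(X_t = n)  (Kendall 1948). *)
Definition bd_p0 (alpha beta t : R) : R :=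
  beta * (exp ((alpha - beta) * t) - 1) / (alpha * exp ((alpha - beta) * t) - beta).
Definition bd_eta (alpha beta t : R) : R :=
  alpha * (exp ((alpha - beta) * t) - 1) / (alpha * exp ((alpha - beta) * t) - beta).
Definition bd_pmf (alpha beta t : R) (n : nat) : R :=
  match n with
  | O => bd_p0 alpha beta t
  | S k => (1 - bd_p0 alpha beta t) * (1 - bd_eta alpha beta t) * bd_eta alpha beta t ^ k
  end.

Fixpoint conv_pow (m : nat -> R) (j : nat) (k : nat) : R :=
  match j with
  | O => match k with O => 1 | S _ => 0 end
  | S j' => sum_f_R0 (fun i => m i * conv_pow m j' (k - i)%nat) k
  end.

(* Model: wild type e^{delta t}; mutants arise at the points of a Poisson
   process of intensity nu e^{delta s} on [0, tau]; a mutant born at s has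
   B-contribution X_{tau - s}, an independent birth-death clone.  B is thus
   compound Poisson with intensity measure (on clone sizes n)
     clone_measure n = int_0^tau nu e^{delta s} P(X_{tau-s} = n) ds,
   total mass Lambda = int_0^tau nu e^{delta s} ds. *)
Definition tau (delta N : R) : R := ln N / delta.

Definition clone_measure (delta nu alpha beta N : R) (n : nat) : R :=
  Rint (fun s => nu * exp (delta * s) * bd_pmf alpha beta (tau delta N - s) n)
       0 (tau delta N).

Definition Lambda (delta nu N : R) : R :=
  Rint (fun s => nu * exp (delta * s)) 0 (tau delta N).

Definition B_pmf (delta nu alpha beta N : R) (k : nat) : R :=
  exp (- Lambda delta nu N) *
  series (fun j => conv_pow (clone_measure delta nu alpha beta N) j k / INR (fact j)).

(* Main.v *)
Require Import Defs.
From Stdlib Require Import Reals Lra Lia Psatz ClassicalEpsilon Arith.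
From Coquelicot Require Import Coquelicot.
Open Scope R_scope.



Lemma inf_sum_lim a l : infinite_sum a l <-> is_lim_seq (sum_f_R0 a) l.
Proof. rewrite is_lim_seq_Reals. split; intro H; exact H. Qed.

Lemma series_eq u l : infinite_sum u l -> series u = l.
Proof. intro H. unfold series. destruct excluded_middle_informative as [e|n].
 - destruct (constructive_indefinite_description _ e) as [x Hx]; simpl. eapply uniqueness_sum; eauto.
 - exfalso; apply n; eauto. Qed.

Lemma partial_diff_le (u c : nat -> R) : (forall n, Rabs (u n) <= c n) ->
 forall K d, Rabs (sum_f_R0 u (K+d) - sum_f_R0 u K) <= sum_f_R0 c (K+d) - sum_f_R0 c K.
Proof. intros H K d; induction d.
 - rewrite Nat.add_0_r. replace (sum_f_R0 u K - sum_f_R0 u K) with 0 by ring.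
   rewrite Rabs_R0; lra.
 - rewrite Nat.add_succ_r, !tech5.
   replace (sum_f_R0 u (K + d) + u (S (K + d)) - sum_f_R0 u K) with
     ((sum_f_R0 u (K + d) - sum_f_R0 u K) + u (S (K + d))) by ring.
   eapply Rle_trans; [apply Rabs_triang|]. specialize (H (S (K+d))). lra. Qed.

Lemma partial_diff_le' (u c : nat -> R) : (forall n, Rabs (u n) <= c n) ->
 forall K M, Rabs (sum_f_R0 u M - sum_f_R0 u K) <= Rabs (sum_f_R0 c M - sum_f_R0 c K).
Proof. intros H K M. destruct (le_lt_dec K M) as [h|h].
 - replace M with (K + (M-K))%nat by lia.
   eapply Rle_trans; [apply partial_diff_le; auto| apply Rle_abs].
 - replace K with (M + (K-M))%nat by lia.
   rewrite Rabs_minus_sym. eapply Rle_trans; [apply partial_diff_le; auto|].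
   rewrite Rabs_minus_sym. apply Rle_abs. Qed.

Lemma tail_bound u c U C : (forall n, Rabs (u n) <= c n) -> infinite_sum u U -> infinite_sum c C ->
  forall K, Rabs (U - sum_f_R0 u K) <= Rabs (C - sum_f_R0 c K).
Proof. intros H HU HC K.
 apply inf_sum_lim in HU. apply inf_sum_lim in HC.
 assert (A: is_lim_seq (fun M => Rabs (sum_f_R0 u M - sum_f_R0 u K)) (Rabs (U - sum_f_R0 u K))).
 { apply (is_lim_seq_abs _ (Finite (U - _))). apply is_lim_seq_minus'; [exact HU| apply is_lim_seq_const]. }
 assert (B: is_lim_seq (fun M => Rabs (sum_f_R0 c M - sum_f_R0 c K)) (Rabs (C - sum_f_R0 c K))).
 { apply (is_lim_seq_abs _ (Finite (C - _))). apply is_lim_seq_minus'; [exact HC| apply is_lim_seq_const]. }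
 exact (is_lim_seq_le _ _ _ _ (fun M => partial_diff_le' u c H K M) A B). Qed.

Lemma RInt_sum (f : nat -> R -> R) a b K : (forall n, ex_RInt (f n) a b) ->
  ex_RInt (fun x => sum_f_R0 (fun n => f n x) K) a b /\
  RInt (fun x => sum_f_R0 (fun n => f n x) K) a b = sum_f_R0 (fun n => RInt (f n) a b) K.
Proof. intros H; induction K; simpl.
 - split; [exact (H 0%nat) | reflexivity].
 - destruct IHK as [E1 E2]. split.
   + apply (ex_RInt_plus _ _ _ _ E1 (H (S K))).
   + pose proof (RInt_plus _ _ _ _ E1 (H (S K))) as HP. simpl in HP. unfold plus in HP; simpl in HP.
     rewrite HP, E2. reflexivity. Qed.

Lemma series_RInt (f : nat -> R -> R) (F : R -> R) (c : nat -> R) a b C :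
 a <= b -> (forall n, ex_RInt (f n) a b) -> ex_RInt F a b ->
 (forall n x, a <= x <= b -> Rabs (f n x) <= c n) -> infinite_sum c C ->
 (forall x, a <= x <= b -> infinite_sum (fun n => f n x) (F x)) ->
 infinite_sum (fun n => RInt (f n) a b) (RInt F a b).
Proof.
 intros hab Hf HF Hc HC Hpt.
 apply inf_sum_lim.
 assert (Hz: is_lim_seq (fun K => (b-a) * Rabs (C - sum_f_R0 c K)) 0).
 { assert (H1: is_lim_seq (fun K => C - sum_f_R0 c K) (C - C)).
   { apply is_lim_seq_minus'; [apply is_lim_seq_const | apply inf_sum_lim; exact HC]. }
   replace (C - C) with 0 in H1 by ring.
   apply (is_lim_seq_abs _ (Finite 0)) in H1. simpl in H1. rewrite Rabs_R0 in H1.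
   apply (is_lim_seq_scal_l _ (b-a)) in H1. simpl in H1. rewrite Rmult_0_r in H1. exact H1. }
 assert (Hl: is_lim_seq (fun K => RInt F a b - (b-a) * Rabs (C - sum_f_R0 c K)) (RInt F a b)).
 { pose proof (is_lim_seq_minus' _ _ _ _ (is_lim_seq_const (RInt F a b)) Hz) as H.
   rewrite Rminus_0_r in H. exact H. }
 assert (Hu: is_lim_seq (fun K => RInt F a b + (b-a) * Rabs (C - sum_f_R0 c K)) (RInt F a b)).
 { pose proof (is_lim_seq_plus' _ _ _ _ (is_lim_seq_const (RInt F a b)) Hz) as H.
   rewrite Rplus_0_r in H. exact H. }
 refine (is_lim_seq_le_le _ _ _ _ _ Hl Hu).
 intro K; simpl.
 destruct (RInt_sum f a b K Hf) as [E1 E2]. rewrite <- E2.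
 assert (Hb: Rabs (RInt (fun x => sum_f_R0 (fun n => f n x) K - F x) a b) <= (b-a) * Rabs (C - sum_f_R0 c K)).
 { apply abs_RInt_le_const; auto.
   - apply (ex_RInt_minus _ _ _ _ E1 HF).
   - intros t Ht. rewrite Rabs_minus_sym. apply tail_bound with (u := fun n => f n t); auto. }
 pose proof (RInt_minus _ _ _ _ E1 HF) as HM. unfold minus, plus, opp in HM; simpl in HM.
 unfold Rminus in Hb at 1. rewrite HM in Hb.
 revert Hb. unfold Rabs; destruct Rcase_abs; intros; lra.
Qed.
Lemma inf_sum_is a l : infinite_sum a l <-> is_series a l.
Proof. symmetry; apply is_series_Reals. Qed.

Lemma inf_sum_plus a b la lb : infinite_sum a la -> infinite_sum b lb ->
  infinite_sum (fun n => a n + b n) (la + lb).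
Proof. rewrite !inf_sum_is. intros; apply (is_series_plus a b); auto. Qed.

Lemma inf_sum_scal c a la : infinite_sum a la -> infinite_sum (fun n => c * a n) (c * la).
Proof. rewrite !inf_sum_is. intros; apply (is_series_scal c a); auto. Qed.

Lemma inf_sum_ext a b l : (forall n, a n = b n) -> infinite_sum a l -> infinite_sum b l.
Proof. rewrite !inf_sum_is. intros; apply (is_series_ext a); auto. Qed.

Lemma inf_sum_le u v lu lv : (forall n, u n <= v n) -> infinite_sum u lu -> infinite_sum v lv -> lu <= lv.
Proof. rewrite !inf_sum_lim. intros H A B.
 exact (is_lim_seq_le _ _ _ _ (fun n => sum_Rle _ _ n (fun i _ => H i)) A B). Qed.

Lemma finite_sum_series (a : nat -> nat -> R) (U : nat -> R) K :
  (forall k, infinite_sum (fun j => a j k) (U k)) ->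
  infinite_sum (fun j => sum_f_R0 (fun k => a j k) K) (sum_f_R0 U K).
Proof. intro H; induction K; simpl.
 - apply H.
 - apply inf_sum_plus; auto. Qed.

Lemma tonelli (a : nat -> nat -> R) (T : nat -> R) SS :
 (forall j k, 0 <= a j k) -> (forall j, infinite_sum (a j) (T j)) -> infinite_sum T SS ->
 exists U, (forall k, infinite_sum (fun j => a j k) (U k)) /\ infinite_sum U SS.
Proof.
 intros Hpos HT HS.
 assert (HaT : forall j k, a j k <= T j).
 { intros j k. apply Rle_trans with (sum_f_R0 (a j) k).
   - destruct k; simpl; [lra|]. pose proof (cond_pos_sum (a j) k (Hpos j)). lra.
   - apply sum_incr; auto. exact (HT j). }
 assert (Hex : forall k, ex_series (fun j => a j k)).
 { intro k. apply (@ex_series_le R_AbsRing R_CompleteNormedModule _ T).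
   - intro n. unfold norm; simpl. unfold abs; simpl. rewrite Rabs_pos_eq; auto.
   - exists SS. apply inf_sum_is; exact HS. }
 set (U := fun k => Series (fun j => a j k)).
 assert (HU : forall k, infinite_sum (fun j => a j k) (U k)).
 { intro k. apply inf_sum_is. apply Series_correct. apply Hex. }
 assert (HUpos : forall k, 0 <= U k).
 { intro k. apply Rle_trans with (sum_f_R0 (fun j => a j k) 0); [simpl; auto|].
   apply sum_incr; auto. exact (HU k). }
 assert (HUS : forall K, sum_f_R0 U K <= SS).
 { intro K. apply (inf_sum_le (fun j => sum_f_R0 (fun k => a j k) K) T).
   - intro j. apply Rle_trans with (sum_f_R0 (a j) K); [right; reflexivity|].
     apply sum_incr; auto. exact (HT j).
   - apply finite_sum_series; auto.
   - exact HS. }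
 destruct (ex_finite_lim_seq_incr (sum_f_R0 U) SS) as [L HL].
 { intro n. simpl. pose proof (HUpos (S n)). lra. }
 { exact HUS. }
 assert (L1 : L <= SS).
 { pose proof (is_lim_seq_le _ _ _ _ HUS HL (is_lim_seq_const SS)). exact H. }
 assert (L2 : SS <= L).
 { assert (HJ : forall J, sum_f_R0 T J <= L).
   { intro J. apply (inf_sum_le (fun k => sum_f_R0 (fun j => a j k) J) U).
     - intro k. apply sum_incr; auto. exact (HU k).
     - apply (finite_sum_series (fun k j => a j k)). intro j. exact (HT j).
     - apply inf_sum_lim. exact HL. }
   apply inf_sum_lim in HS.
   pose proof (is_lim_seq_le _ _ _ _ HJ HS (is_lim_seq_const L)). exact H. }
 exists U. split; auto. apply inf_sum_lim. replace SS with L by lra. exact HL.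
Qed.
Lemma inf_sum_partial u l : (forall n, sum_f_R0 u n = l) -> infinite_sum u l.
Proof. intro H. apply inf_sum_lim. apply (is_lim_seq_ext (fun _ => l)); [intro n; rewrite H; auto|].
 apply is_lim_seq_const. Qed.

Lemma mult_nonneg a b la lb : (forall n, 0 <= a n) -> (forall n, 0 <= b n) ->
  infinite_sum a la -> infinite_sum b lb ->
  infinite_sum (fun n => sum_f_R0 (fun k => a k * b (n-k)%nat) n) (la*lb).
Proof. intros Ha Hb A B. apply inf_sum_is. apply is_series_mult; try (apply inf_sum_is; auto).
 - exists la. apply inf_sum_is. apply (inf_sum_ext a); auto. intro n; rewrite Rabs_pos_eq; auto.
 - exists lb. apply inf_sum_is. apply (inf_sum_ext b); auto. intro n; rewrite Rabs_pos_eq; auto. Qed.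

Lemma conv_pow_pos m : (forall n, 0 <= m n) -> forall j k, 0 <= conv_pow m j k.
Proof. intros H j; induction j; intro k; simpl.
 - destruct k; lra.
 - apply cond_pos_sum. intro i. apply Rmult_le_pos; auto. Qed.

Lemma conv_moments (m : nat -> R) L M1 M2 : (forall n, 0 <= m n) ->
 infinite_sum m L -> infinite_sum (fun n => INR n * m n) M1 ->
 infinite_sum (fun n => INR n ^ 2 * m n) M2 ->
 forall j, infinite_sum (conv_pow m j) (L ^ j) /\
   infinite_sum (fun k => INR k * conv_pow m j k) (INR j * L ^ (j-1) * M1) /\
   infinite_sum (fun k => INR k ^ 2 * conv_pow m j k)
     (INR j * L^(j-1) * M2 + INR j * (INR j - 1) * L^(j-2) * M1^2).
Proof.
 intros Hm H0 H1 H2 j. pose proof (conv_pow_pos m Hm) as Hc.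
 assert (Hm1 : forall n, 0 <= INR n * m n) by (intro; apply Rmult_le_pos; auto; apply pos_INR).
 assert (Hm2 : forall n, 0 <= INR n ^ 2 * m n) by (intro; apply Rmult_le_pos; auto; apply pow_le, pos_INR).
 induction j as [|j [IH0 [IH1 IH2]]].
 - simpl. split; [|split]; apply inf_sum_partial; intro n; induction n; simpl; auto; try lra;
   rewrite IHn; ring.
 - assert (Hc1 : forall k, 0 <= INR k * conv_pow m j k) by (intro; apply Rmult_le_pos; auto; apply pos_INR).
   assert (Hc2 : forall k, 0 <= INR k ^ 2 * conv_pow m j k) by (intro; apply Rmult_le_pos; auto; apply pow_le, pos_INR).
   split; [|split].
   + apply (mult_nonneg m (conv_pow m j)); auto.
   + assert (E : forall k, sum_f_R0 (fun i => (INR i * m i) * conv_pow m j (k-i)) k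
        + sum_f_R0 (fun i => m i * (INR (k-i) * conv_pow m j (k-i))) k = INR k * conv_pow m (S j) k).
     { intro k. change (conv_pow m (S j) k) with (sum_f_R0 (fun i => m i * conv_pow m j (k-i)) k).
       rewrite scal_sum, <- sum_plus. apply sum_eq. intros i Hi. rewrite minus_INR by lia. ring. }
     apply (inf_sum_ext _ _ _ E).
     pose proof (inf_sum_plus _ _ _ _ (mult_nonneg _ _ _ _ Hm1 (Hc j) H1 IH0)
                                     (mult_nonneg _ _ _ _ Hm Hc1 H0 IH1)) as HH.
     match goal with |- infinite_sum _ ?v => replace v with (M1 * L ^ j + L * (INR j * L ^ (j - 1) * M1)) end; auto.
     destruct j; simpl; rewrite ?S_INR; simpl; try ring.
     rewrite Nat.sub_0_r. ring.
   + assert (E : forall k, sum_f_R0 (fun i => (INR i ^2 * m i) * conv_pow m j (k-i)) k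
        + 2 * sum_f_R0 (fun i => (INR i * m i) * (INR (k-i) * conv_pow m j (k-i))) k
        + sum_f_R0 (fun i => m i * (INR (k-i) ^ 2 * conv_pow m j (k-i))) k = INR k ^ 2 * conv_pow m (S j) k).
     { intro k. change (conv_pow m (S j) k) with (sum_f_R0 (fun i => m i * conv_pow m j (k-i)) k).
       rewrite (scal_sum _ k 2), (scal_sum _ k (INR k ^ 2)), <- !sum_plus. apply sum_eq. intros i Hi. rewrite minus_INR by lia. ring. }
     apply (inf_sum_ext _ _ _ E).
     pose proof (inf_sum_plus _ _ _ _ (inf_sum_plus _ _ _ _ (mult_nonneg _ _ _ _ Hm2 (Hc j) H2 IH0)
                 (inf_sum_scal 2 _ _ (mult_nonneg _ _ _ _ Hm1 Hc1 H1 IH1)))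
                                     (mult_nonneg _ _ _ _ Hm Hc2 H0 IH2)) as HH.
     match goal with |- infinite_sum _ ?v => replace v with
       (M2 * L ^ j + 2 * (M1 * (INR j * L ^ (j - 1) * M1)) + L * (INR j * L ^ (j - 1) * M2 + INR j * (INR j - 1) * L ^ (j - 2) * M1 ^ 2)) end; auto.
     destruct j as [|[|j]]; simpl; rewrite ?S_INR; simpl; try ring.
     rewrite ?Nat.sub_0_r. ring.
Qed.
Lemma exp_le a b : a <= b -> exp a <= exp b.
Proof. intro H; destruct (Rle_lt_or_eq_dec _ _ H) as [h|h]; [left; apply exp_increasing; auto | subst; lra]. Qed.

Lemma exp_ge1 a : 0 <= a -> 1 <= exp a.
Proof. intro; rewrite <- exp_0; apply exp_le; auto. Qed.

Lemma inf_sum_shift a l : infinite_sum (fun k => a (S k)) (l - a 0%nat) -> infinite_sum a l.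
Proof. rewrite !inf_sum_is. intro H. apply is_series_decr_1. exact H. Qed.

Lemma sum_INRS k : sum_f_R0 (fun i => INR (S i)) k = INR (S k) * INR (S (S k)) / 2.
Proof. induction k. - simpl; field. - rewrite tech5, IHk. rewrite !S_INR. field. Qed.

Lemma geom0 x : 0 <= x < 1 -> infinite_sum (fun k => x ^ k) (/ (1 - x)).
Proof. intro H. apply inf_sum_is. apply is_series_geom. rewrite Rabs_pos_eq; lra. Qed.

Lemma geom1 x : 0 <= x < 1 -> infinite_sum (fun k => INR (S k) * x ^ k) (/ (1 - x) ^ 2).
Proof. intro H.
 assert (Hp : forall n, 0 <= x ^ n) by (intro; apply pow_le; lra).
 pose proof (mult_nonneg _ _ _ _ Hp Hp (geom0 x H) (geom0 x H)) as M.
 apply (inf_sum_ext (fun n => sum_f_R0 (fun k => x ^ k * x ^ (n - k)) n)).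
 - intro n. rewrite (sum_eq _ (fun _ => x ^ n)). rewrite sum_cte; ring.
   intros i Hi. rewrite <- pow_add. f_equal. lia.
 - replace (/ (1 - x) ^ 2) with (/ (1 - x) * / (1 - x)) by (field; lra). exact M. Qed.

Lemma geom2 x : 0 <= x < 1 -> infinite_sum (fun k => INR (S k) ^ 2 * x ^ k) ((1 + x) / (1 - x) ^ 3).
Proof. intro H.
 assert (Hp : forall n, 0 <= x ^ n) by (intro; apply pow_le; lra).
 assert (Hp1 : forall n, 0 <= INR (S n) * x ^ n) by (intro; apply Rmult_le_pos; auto; apply pos_INR).
 pose proof (mult_nonneg _ _ _ _ Hp1 Hp (geom1 x H) (geom0 x H)) as M.
 assert (M' : infinite_sum (fun n => INR (S n) * INR (S (S n)) / 2 * x ^ n) (/ (1 - x) ^ 2 * / (1 - x))).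
 { refine (inf_sum_ext _ _ _ _ M). intro n. cbv beta.
   rewrite (sum_eq _ (fun i => INR (S i) * x ^ n)). rewrite <- scal_sum, sum_INRS. ring.
   intros i Hi. rewrite Rmult_assoc, <- pow_add. do 2 f_equal. lia. }
 pose proof (inf_sum_plus _ _ _ _ (inf_sum_scal 2 _ _ M') (inf_sum_scal (-1) _ _ (geom1 x H))) as M2.
 replace ((1 + x) / (1 - x) ^ 3) with (2 * (/ (1 - x) ^ 2 * / (1 - x)) + -1 * / (1 - x) ^ 2) by (field; lra).
 refine (inf_sum_ext _ _ _ _ M2). intro n. cbv beta. rewrite (S_INR (S n)). field.
 Qed.



Lemma inf_sum_eq a l l' : infinite_sum a l -> l = l' -> infinite_sum a l'.
Proof. intros H ->; exact H. Qed.

Lemma bd_basic al be t : 0 <= be -> be < al -> 0 <= t ->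
  1 <= exp ((al-be)*t) /\ 0 < al * exp ((al-be)*t) - be /\
  0 <= bd_eta al be t < 1 /\ 0 <= bd_p0 al be t <= 1 /\
  bd_eta al be t = 1 - (al - be) / (al * exp ((al-be)*t) - be) /\
  1 - bd_p0 al be t = (al - be) * exp ((al-be)*t) / (al * exp ((al-be)*t) - be).
Proof. intros Hb Hab Ht.
 assert (HE : 1 <= exp ((al-be)*t)) by (apply exp_ge1; nra).
 set (E := exp ((al-be)*t)) in *.
 assert (HD : 0 < al * E - be) by nra.
 unfold bd_eta, bd_p0. fold E.
 assert (Hq : 0 < (al - be) / (al * E - be)) by (apply Rdiv_lt_0_compat; lra).
 split; [auto|split; [auto|]].
 assert (Heq : al * (E - 1) / (al * E - be) = 1 - (al - be) / (al * E - be)) by (field; lra).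
 assert (Hp : 1 - be * (E - 1) / (al * E - be) = (al - be) * E / (al * E - be)) by (field; lra).
 split; [|split; [|split; auto]].
 - split. + apply Rdiv_le_0_compat; nra. + lra.
 - split. + apply Rdiv_le_0_compat; nra.
   + assert (0 <= (al - be) * E / (al * E - be)) by (apply Rdiv_le_0_compat; nra). lra.
Qed.

Lemma bd_sums al be t : 0 <= be -> be < al -> 0 <= t ->
 infinite_sum (bd_pmf al be t) 1 /\
 infinite_sum (fun n => INR n * bd_pmf al be t n) (exp ((al-be)*t)) /\
 infinite_sum (fun n => INR n ^ 2 * bd_pmf al be t n)
   (exp ((al-be)*t) * (2 * al * exp ((al-be)*t) - al - be) / (al - be)).
Proof. intros Hb Hab Ht.
 destruct (bd_basic al be t Hb Hab Ht) as (HE & HD & Heta & Hp0 & Eeta & Ep0).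
 set (A := (1 - bd_p0 al be t) * (1 - bd_eta al be t)).
 assert (Hv : 1 - bd_eta al be t = (al - be) / (al * exp ((al-be)*t) - be)) by lra.
 assert (Hn : 1 - bd_eta al be t <> 0).
 { rewrite Hv. apply Rgt_not_eq. apply Rdiv_lt_0_compat; lra. }
 split; [|split]; apply inf_sum_shift.
 - refine (inf_sum_eq _ _ _ (inf_sum_ext _ _ _ _ (inf_sum_scal A _ _ (geom0 _ Heta))) _).
   + intro n. reflexivity.
   + simpl bd_pmf. unfold A. field. auto.
 - refine (inf_sum_eq _ _ _ (inf_sum_ext _ _ _ _ (inf_sum_scal A _ _ (geom1 _ Heta))) _).
   + intro n. simpl bd_pmf. unfold A. ring.
   + simpl bd_pmf. unfold A. rewrite Ep0, Hv. simpl INR. field. lra.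
 - refine (inf_sum_eq _ _ _ (inf_sum_ext _ _ _ _ (inf_sum_scal A _ _ (geom2 _ Heta))) _).
   + intro n. simpl bd_pmf. unfold A. ring.
   + simpl bd_pmf. unfold A. rewrite Ep0, Eeta. rewrite Eeta in Hv. rewrite Hv. simpl INR. field. lra.
Qed.



Lemma Rint_RInt f a b : ex_RInt f a b -> Rint f a b = RInt f a b.
Proof. intro H. unfold Rint. destruct excluded_middle_informative as [e|n].
 -
   symmetry. apply RInt_Reals.
 - exfalso. apply n. constructor. apply ex_RInt_Reals_0. exact H. Qed.

Lemma bd_pmf_pos al be t n : 0 <= be -> be < al -> 0 <= t -> 0 <= bd_pmf al be t n.
Proof. intros Hb Hab Ht. destruct (bd_basic al be t Hb Hab Ht) as (_ & _ & He & Hp & _ & _).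
 destruct n; simpl; [lra|]. apply Rmult_le_pos; [apply Rmult_le_pos; lra|]. apply pow_le; lra. Qed.

Lemma bd_pmf_cont al be T n z : 0 <= be -> be < al -> 0 <= T - z ->
  ex_derive (fun s => bd_pmf al be (T - s) n) z.
Proof. intros Hb Hab Hz.
 assert (1 <= exp ((al - be) * (T + - z))) by (apply exp_ge1; nra).
 destruct n; unfold bd_pmf, bd_p0, bd_eta; auto_derive; repeat split; nra. Qed.

Lemma tau_pos delta N : 0 < delta -> 1 < N -> 0 < tau delta N.
Proof. intros. unfold tau. apply Rdiv_lt_0_compat; auto. rewrite <- ln_1. apply ln_increasing; lra. Qed.

Lemma geom_r r h : (r <= 2)%nat -> 0 <= h < 1 -> exists l, infinite_sum (fun k => INR (S k) ^ r * h ^ k) l.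
Proof. intros Hr Hh. destruct r as [|[|[|r]]]; try lia.
 - eexists. refine (inf_sum_ext _ _ _ _ (geom0 h Hh)). intro; simpl; ring.
 - eexists. refine (inf_sum_ext _ _ _ _ (geom1 h Hh)). intro; simpl; ring.
 - eexists. exact (geom2 h Hh). Qed.

Lemma moment_gen delta nu al be N r (V : R -> R) :
  0 < delta -> 0 < nu -> 0 <= be -> be < al -> 1 < N -> (r <= 2)%nat ->
  (forall t, 0 <= t -> infinite_sum (fun n => INR n ^ r * bd_pmf al be t n) (V t)) ->
  (forall z, continuous (fun s => nu * exp (delta * s) * V (tau delta N - s)) z) ->
  infinite_sum (fun n => INR n ^ r * clone_measure delta nu al be N n)
    (RInt (fun s => nu * exp (delta * s) * V (tau delta N - s)) 0 (tau delta N)).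
Proof.
 intros Hd Hnu Hb Hab HN Hr HV HC.
 pose proof (tau_pos delta N Hd HN) as Htau. set (T := tau delta N) in *.
 set (h := fun n s => nu * exp (delta * s) * bd_pmf al be (T - s) n).
 assert (Hh : forall n, ex_RInt (h n) 0 T).
 { intro n. apply (@ex_RInt_continuous R_CompleteNormedModule). intros z Hz.
   rewrite Rmin_left in Hz by lra. rewrite Rmax_right in Hz by lra.
   apply (@ex_derive_continuous R_AbsRing R_NormedModule). unfold h.
   apply ex_derive_mult; [auto_derive; auto|]. apply bd_pmf_cont; lra. }
 assert (E : forall n, INR n ^ r * clone_measure delta nu al be N n = RInt (fun s => INR n ^ r * h n s) 0 T).
 { intro n. unfold clone_measure. fold T. rewrite Rint_RInt by apply Hh.
   pose proof (RInt_scal (h n) 0 T (INR n ^ r) (Hh n)) as HS. unfold scal in HS; simpl in HS.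
   unfold mult in HS; simpl in HS. rewrite HS. reflexivity. }
 refine (inf_sum_ext _ _ _ (fun n => eq_sym (E n)) _).
 set (hT := bd_eta al be T).
 destruct (bd_basic al be T Hb Hab ltac:(lra)) as (_ & HDT & HeT & _ & EeT & _).
 destruct (geom_r r hT Hr HeT) as [l Hl].
 set (cc := fun n => match n with O => 1 | S k => INR (S k) ^ r * hT ^ k end).
 assert (Hcc : infinite_sum cc (l + 1)).
 { apply inf_sum_shift. replace (l + 1 - cc 0%nat) with l by (simpl; ring). exact Hl. }
 apply (series_RInt _ _ (fun n => nu * exp (delta * T) * cc n) 0 T (nu * exp (delta * T) * (l + 1))); try lra.
 - intro n. apply (ex_RInt_scal (h n) 0 T (INR n ^ r) (Hh n)).
 - apply (@ex_RInt_continuous R_CompleteNormedModule). intros; apply HC.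
 - intros n x Hx.
   assert (Ht : 0 <= T - x) by lra.
   destruct (bd_basic al be (T - x) Hb Hab Ht) as (_ & HDx & Hex & Hpx & Eex & _).
   assert (Hpos : 0 <= INR n ^ r * h n x).
   { apply Rmult_le_pos; [apply pow_le, pos_INR|]. unfold h. apply Rmult_le_pos.
     apply Rmult_le_pos; [lra|left; apply exp_pos]. apply bd_pmf_pos; lra. }
   rewrite Rabs_pos_eq by exact Hpos.
   assert (Hexp : nu * exp (delta * x) <= nu * exp (delta * T)).
   { apply Rmult_le_compat_l; [lra|]. apply exp_le. nra. }
   assert (Hexp0 : 0 <= nu * exp (delta * x)) by (apply Rmult_le_pos; [lra|left; apply exp_pos]).
   unfold h. destruct n as [|k].
   + simpl bd_pmf. simpl cc.
     assert (Hr0 : 0 <= INR 0 ^ r <= 1) by (destruct r; simpl; lra).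
     apply Rle_trans with (1 * (nu * exp (delta * T) * 1)); [|lra].
     apply Rmult_le_compat; try lra. apply Rmult_le_pos; lra.
     apply Rmult_le_compat; lra.
   + simpl bd_pmf. unfold cc; cbv beta iota.
     assert (Heta : bd_eta al be (T - x) <= hT).
     { unfold hT. rewrite Eex, EeT.
       assert (al * exp ((al - be) * (T - x)) - be <= al * exp ((al - be) * T) - be).
       { assert (exp ((al - be) * (T - x)) <= exp ((al - be) * T)) by (apply exp_le; nra). nra. }
       assert ((al - be) / (al * exp ((al - be) * T) - be) <= (al - be) / (al * exp ((al - be) * (T - x)) - be)).
       { unfold Rdiv. apply Rmult_le_compat_l; [lra|]. apply Rinv_le_contravar; lra. }
       lra. }
     assert (HA : 0 <= (1 - bd_p0 al be (T - x)) * (1 - bd_eta al be (T - x)) <= 1).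
     { split. apply Rmult_le_pos; lra.
       apply Rle_trans with (1 * 1); [|lra]. apply Rmult_le_compat; lra. }
     assert (Hpw : 0 <= bd_eta al be (T - x) ^ k <= hT ^ k).
     { split. apply pow_le; lra. apply pow_incr; lra. }
     assert (Hir : 0 <= INR (S k) ^ r) by (apply pow_le, pos_INR).
     set (P := INR (S k) ^ r) in *. set (A := (1 - bd_p0 al be (T - x)) * (1 - bd_eta al be (T - x))) in *.
     set (e1 := bd_eta al be (T - x) ^ k) in *. set (e2 := hT ^ k) in *.
     set (w1 := nu * exp (delta * x)) in *. set (w2 := nu * exp (delta * T)) in *.
     apply Rle_trans with (P * (w2 * (1 * e2))); [|right; ring].
     apply Rmult_le_compat_l; auto.
     apply Rmult_le_compat; try lra. apply Rmult_le_pos; lra.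
     apply Rmult_le_compat; lra.
 - apply inf_sum_scal. exact Hcc.
 - intros x Hx. cbv beta. unfold h.
   refine (inf_sum_ext _ _ _ _ (inf_sum_scal (nu * exp (delta * x)) _ _ (HV (T - x) ltac:(lra)))).
   intro n; cbv beta; ring.
Qed.



Lemma is_RInt_exp_nz a b T : a <> 0 ->
  is_RInt (fun s => exp (a * s + b)) 0 T ((exp (a * T + b) - exp b) / a).
Proof. intro Ha.
 assert (H := @is_RInt_derive R_CompleteNormedModule (fun s => exp (a * s + b) / a) (fun s => exp (a * s + b)) 0 T).
 replace ((exp (a * T + b) - exp b) / a) with (minus (exp (a * T + b) / a) (exp (a * 0 + b) / a)).
 - apply H.
   + intros x _. auto_derive; auto. field; auto.
   + intros x _. apply (@ex_derive_continuous R_AbsRing R_NormedModule). auto_derive; auto.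
 - unfold minus, plus, opp; simpl. rewrite Rmult_0_r, Rplus_0_l. field; auto. Qed.

Lemma is_RInt_exp_z b T :
  is_RInt (fun s => exp (0 * s + b)) 0 T (T * exp b).
Proof.
 apply (is_RInt_ext (fun _ => exp b)). intros; rewrite Rmult_0_l, Rplus_0_l; auto.
 replace (T * exp b) with (scal (T - 0) (exp b)).
 apply (@is_RInt_const R_NormedModule). unfold scal; simpl; unfold mult; simpl; ring. Qed.



Lemma clone_pos delta nu al be N n :
  0 < delta -> 0 < nu -> 0 <= be -> be < al -> 1 < N -> 0 <= clone_measure delta nu al be N n.
Proof.
 intros Hd Hnu Hb Hab HN.
 pose proof (tau_pos delta N Hd HN) as Htau. unfold clone_measure. set (T := tau delta N) in *.
 assert (Hh : ex_RInt (fun s => nu * exp (delta * s) * bd_pmf al be (T - s) n) 0 T).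
 { apply (@ex_RInt_continuous R_CompleteNormedModule). intros z Hz.
   rewrite Rmin_left in Hz by lra. rewrite Rmax_right in Hz by lra.
   apply (@ex_derive_continuous R_AbsRing R_NormedModule).
   apply ex_derive_mult; [auto_derive; auto|]. apply bd_pmf_cont; lra. }
 rewrite Rint_RInt by exact Hh. apply RInt_ge_0; auto; try lra.
 intros x Hx. apply Rmult_le_pos. apply Rmult_le_pos; [lra|left; apply exp_pos].
 apply bd_pmf_pos; lra. Qed.

Lemma exp_ser x : infinite_sum (fun j => x ^ j / INR (fact j)) (exp x).
Proof. unfold exp. destruct (exist_exp x) as [l Hl]. simpl. unfold exp_in in Hl.
 refine (inf_sum_ext _ _ _ _ Hl). intro j. unfold Rdiv; ring. Qed.

Lemma fact_S_INR j : INR (fact (S j)) = INR (S j) * INR (fact j).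
Proof. rewrite fact_simpl, mult_INR. reflexivity. Qed.

Lemma exp_ser1 x : infinite_sum (fun j => INR j * x ^ (j-1) / INR (fact j)) (exp x).
Proof. apply inf_sum_shift. refine (inf_sum_eq _ _ _ (inf_sum_ext _ _ _ _ (exp_ser x)) _).
 - intro j. cbv beta. rewrite fact_S_INR. replace (S j - 1)%nat with j by lia.
   field. split; [apply INR_fact_neq_0 | apply not_0_INR; lia].
 - simpl. field. Qed.

Lemma exp_ser2 x : infinite_sum (fun j => INR j * (INR j - 1) * x ^ (j-2) / INR (fact j)) (exp x).
Proof. apply inf_sum_shift. apply inf_sum_shift.
 refine (inf_sum_eq _ _ _ (inf_sum_ext _ _ _ _ (exp_ser x)) _).
 - intro j. cbv beta. rewrite !fact_S_INR. replace (S (S j) - 2)%nat with j by lia.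
   assert (INR (S j) <> 0) by (apply not_0_INR; lia).
   assert (INR (S (S j)) <> 0) by (apply not_0_INR; lia).
   pose proof (INR_fact_neq_0 j).
   rewrite (S_INR (S j)) in *. field. auto.
 - simpl. field. Qed.

Lemma M2_is delta nu al be N I1 I2 : be < al ->
  is_RInt (fun s => exp ((delta - 2 * (al - be)) * s + 2 * (al - be) * tau delta N)) 0 (tau delta N) I1 ->
  is_RInt (fun s => exp ((delta - (al - be)) * s + (al - be) * tau delta N)) 0 (tau delta N) I2 ->
  RInt (fun s => nu * exp (delta * s) *
     (exp ((al-be)*(tau delta N - s)) * (2 * al * exp ((al-be)*(tau delta N - s)) - al - be) / (al - be)))
     0 (tau delta N) = nu / (al - be) * (2 * al * I1 - (al + be) * I2).
Proof. intros Hab H1 H2. apply is_RInt_unique.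
 pose proof (@is_RInt_scal R_NormedModule _ _ _ (nu / (al - be))  _
   (@is_RInt_minus R_NormedModule _ _ _ _ _ _ (@is_RInt_scal R_NormedModule _ _ _ (2 * al) _ H1)
                   (@is_RInt_scal R_NormedModule _ _ _ (al + be) _ H2))) as H.
 unfold scal, minus, plus, opp in H; simpl in H; unfold mult in H; simpl in H.
 replace (nu / (al - be) * (2 * al * I1 - (al + be) * I2)) with
   (nu / (al - be) * (2 * al * I1 + - ((al + be) * I2))) by ring.
 refine (is_RInt_ext _ _ _ _ _ _ H). intros x _.
 set (T := tau delta N).
 replace ((delta - 2 * (al - be)) * x + 2 * (al - be) * T) with
   (delta * x + ((al - be) * (T - x) + (al - be) * (T - x))) by ring.
 replace ((delta - (al - be)) * x + (al - be) * T) with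
   (delta * x + (al - be) * (T - x)) by ring.
 rewrite !exp_plus. match goal with |- ?a = ?b => change (@eq R a b) end. field. lra. Qed.



Theorem mainTheorem3 (delta nu alpha beta N : R)
  (Hdelta : 0 < delta) (Hnu : 0 < nu) (Hbeta : 0 <= beta) (Hab : beta < alpha)
  (HN : 1 < N) :
  let q := beta / alpha in
  let gamma := delta / (alpha - beta) in
  let mu := nu / alpha in
  let C := N * mu / (1 - q) ^ 2 in
  exists m1 m2 : R,
    infinite_sum (fun k => INR k * B_pmf delta nu alpha beta N k) m1 /\
    infinite_sum (fun k => INR k ^ 2 * B_pmf delta nu alpha beta N k) m2 /\
    (gamma = 1 ->
       m2 - m1 ^ 2 = C * (2 * (N - 1) - (1 + q) * ln N)) /\
    (gamma = 2 ->
       m2 - m1 ^ 2 = C * ((1 + q) * (Rpower N (-1/2) - 1) + ln N)) /\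
    (gamma <> 1 -> gamma <> 2 ->
       m2 - m1 ^ 2 =
         C * (2 / (2 - gamma) * Rpower N (2 / gamma - 1)
              + (1 + q) / (gamma - 1) * Rpower N (1 / gamma - 1)
              + (q * (2 - gamma) + gamma) / ((2 - gamma) * (1 - gamma)))).
Proof.
 intros q gamma mu C.
 pose proof (tau_pos delta N Hdelta HN) as Htau.
 assert (Hlam : 0 < alpha - beta) by lra.
 pose proof (moment_gen delta nu alpha beta N 0 (fun _ => 1) Hdelta Hnu Hbeta Hab HN ltac:(lia)) as G0.
 pose proof (moment_gen delta nu alpha beta N 1 (fun t => exp ((alpha - beta) * t)) Hdelta Hnu Hbeta Hab HN ltac:(lia)) as G1.
 pose proof (moment_gen delta nu alpha beta N 2
   (fun t => exp ((alpha-beta)*t) * (2 * alpha * exp ((alpha-beta)*t) - alpha - beta) / (alpha - beta))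
   Hdelta Hnu Hbeta Hab HN ltac:(lia)) as G2.
 assert (Hm0 : infinite_sum (clone_measure delta nu alpha beta N) (Lambda delta nu N)).
 { refine (inf_sum_eq _ _ _ (inf_sum_ext _ _ _ _ (G0 _ _)) _).
   - intro n. simpl. ring.
   - intros t Ht. destruct (bd_sums alpha beta t Hbeta Hab Ht) as [S0 _].
     refine (inf_sum_ext _ _ _ _ S0). intro n; simpl; ring.
   - intro z. apply (@ex_derive_continuous R_AbsRing R_NormedModule). auto_derive; auto.
   - unfold Lambda. rewrite Rint_RInt.
     + apply RInt_ext. intros. match goal with |- ?a = ?b => change (@eq R a b) end. ring.
     + apply (@ex_RInt_continuous R_CompleteNormedModule). intros z _.
       apply (@ex_derive_continuous R_AbsRing R_NormedModule). auto_derive; auto. }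
 set (M1 := RInt (fun s => nu * exp (delta * s) * exp ((alpha - beta) * (tau delta N - s))) 0 (tau delta N)).
 assert (Hm1 : infinite_sum (fun n => INR n * clone_measure delta nu alpha beta N n) M1).
 { refine (inf_sum_ext _ _ _ _ (G1 _ _)).
   - intro n. simpl. ring.
   - intros t Ht. destruct (bd_sums alpha beta t Hbeta Hab Ht) as [_ [S1 _]].
     refine (inf_sum_ext _ _ _ _ S1). intro n; simpl; ring.
   - intro z. apply (@ex_derive_continuous R_AbsRing R_NormedModule). auto_derive; auto. }
 set (M2 := RInt (fun s => nu * exp (delta * s) *
     (exp ((alpha-beta)*(tau delta N - s)) * (2 * alpha * exp ((alpha-beta)*(tau delta N - s)) - alpha - beta) / (alpha - beta)))
     0 (tau delta N)).
 assert (Hm2 : infinite_sum (fun n => INR n ^ 2 * clone_measure delta nu alpha beta N n) M2).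
 { apply G2.
   - intros t Ht. destruct (bd_sums alpha beta t Hbeta Hab Ht) as [_ [_ S2]]. exact S2.
   - intro z. apply (@ex_derive_continuous R_AbsRing R_NormedModule). auto_derive; auto. }
 clear G0 G1 G2.
 set (m := clone_measure delta nu alpha beta N) in *.
 set (L := Lambda delta nu N) in *.
 assert (Hpos : forall n, 0 <= m n) by (intro; apply clone_pos; auto).
 pose proof (conv_moments m L M1 M2 Hpos Hm0 Hm1 Hm2) as CM.
 assert (Hf : forall j, 0 < INR (fact j)) by (intro; apply INR_fact_lt_0).
 assert (HeL : exp (- L) * exp L = 1) by (rewrite exp_Ropp; field; apply Rgt_not_eq, exp_pos).
 assert (HeLp : 0 <= exp (- L)) by (left; apply exp_pos).
 destruct (tonelli (fun j k => / INR (fact j) * conv_pow m j k) (fun j => / INR (fact j) * L ^ j) (exp L))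
   as [V0 [HV0 _]].
 { intros j k. apply Rmult_le_pos; [left; apply Rinv_0_lt_compat; auto | apply conv_pow_pos; auto]. }
 { intro j. apply inf_sum_scal. apply (CM j). }
 { refine (inf_sum_ext _ _ _ _ (exp_ser L)). intro j; unfold Rdiv; ring. }
 assert (HB : forall k, B_pmf delta nu alpha beta N k = exp (- L) * V0 k).
 { intro k. unfold B_pmf. rewrite (series_eq _ (V0 k)); [reflexivity|].
   refine (inf_sum_ext _ _ _ _ (HV0 k)). intro j; unfold m, Rdiv; ring. }
 destruct (tonelli (fun j k => exp (- L) / INR (fact j) * (INR k * conv_pow m j k))
   (fun j => exp (- L) / INR (fact j) * (INR j * L ^ (j - 1) * M1)) M1) as [U1 [HU1 HU1s]].
 { intros j k. apply Rmult_le_pos. apply Rdiv_le_0_compat; auto.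
   apply Rmult_le_pos; [apply pos_INR | apply conv_pow_pos; auto]. }
 { intro j. apply inf_sum_scal. apply (CM j). }
 { refine (inf_sum_eq _ _ _ (inf_sum_ext _ _ _ _ (inf_sum_scal (exp (- L) * M1) _ _ (exp_ser1 L))) _).
   - intro j; unfold Rdiv; ring.
   - transitivity (M1 * (exp (- L) * exp L)); [ring | rewrite HeL; ring]. }
 assert (EU1 : forall k, U1 k = INR k * B_pmf delta nu alpha beta N k).
 { intro k. rewrite HB. eapply uniqueness_sum; [apply (HU1 k)|].
   refine (inf_sum_eq _ _ _ (inf_sum_ext _ _ _ _ (inf_sum_scal (exp (- L) * INR k) _ _ (HV0 k))) _).
   - intro j; unfold Rdiv; ring.
   - ring. }
 destruct (tonelli (fun j k => exp (- L) / INR (fact j) * (INR k ^ 2 * conv_pow m j k))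
   (fun j => exp (- L) / INR (fact j) *
      (INR j * L^(j-1) * M2 + INR j * (INR j - 1) * L^(j-2) * M1^2)) (M2 + M1 ^ 2)) as [U2 [HU2 HU2s]].
 { intros j k. apply Rmult_le_pos. apply Rdiv_le_0_compat; auto.
   apply Rmult_le_pos; [apply pow_le, pos_INR | apply conv_pow_pos; auto]. }
 { intro j. apply inf_sum_scal. apply (CM j). }
 { refine (inf_sum_eq _ _ _ (inf_sum_ext _ _ _ _ (inf_sum_plus _ _ _ _
     (inf_sum_scal (exp (- L) * M2) _ _ (exp_ser1 L)) (inf_sum_scal (exp (- L) * M1 ^ 2) _ _ (exp_ser2 L)))) _).
   - intro j; unfold Rdiv; ring.
   - transitivity ((M2 + M1 ^ 2) * (exp (- L) * exp L)); [ring | rewrite HeL; ring]. }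
 assert (EU2 : forall k, U2 k = INR k ^ 2 * B_pmf delta nu alpha beta N k).
 { intro k. rewrite HB. eapply uniqueness_sum; [apply (HU2 k)|].
   refine (inf_sum_eq _ _ _ (inf_sum_ext _ _ _ _ (inf_sum_scal (exp (- L) * INR k ^ 2) _ _ (HV0 k))) _).
   - intro j; unfold Rdiv; ring.
   - ring. }
 exists M1, (M2 + M1 ^ 2).
 split; [refine (inf_sum_ext _ _ _ EU1 HU1s)|].
 split; [refine (inf_sum_ext _ _ _ EU2 HU2s)|].
 assert (EV : M2 + M1 ^ 2 - M1 ^ 2 = M2) by ring. rewrite EV.
 assert (EI : forall I1 I2,
   is_RInt (fun s => exp ((delta - 2 * (alpha - beta)) * s + 2 * (alpha - beta) * tau delta N)) 0 (tau delta N) I1 ->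
   is_RInt (fun s => exp ((delta - (alpha - beta)) * s + (alpha - beta) * tau delta N)) 0 (tau delta N) I2 ->
   M2 = nu / (alpha - beta) * (2 * alpha * I1 - (alpha + beta) * I2)).
 { intros I1 I2 H1 H2. apply M2_is; auto. }
 clearbody M2.
 set (T := tau delta N) in *.
 set (X := exp ((alpha - beta) * T)).
 assert (Hln : ln N = delta * T) by (unfold T, tau; field; lra).
 assert (HNe : exp (delta * T) = N) by (rewrite <- Hln; apply exp_ln; lra).
 assert (HX2 : exp (2 * (alpha - beta) * T) = X ^ 2).
 { unfold X. replace (2 * (alpha - beta) * T) with ((alpha - beta) * T + (alpha - beta) * T) by ring.
   rewrite exp_plus; ring. }
 assert (HXpos : 0 < X) by apply exp_pos.
 assert (Ha : alpha <> 0) by lra.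
 assert (Hl : alpha - beta <> 0) by lra.
 assert (Hq : 1 - beta / alpha <> 0).
 { replace (1 - beta / alpha) with ((alpha - beta) / alpha) by (field; auto). apply Rgt_not_eq, Rdiv_lt_0_compat; lra. }
 assert (HN0 : N <> 0) by lra.
 assert (Hd : delta = gamma * (alpha - beta)) by (unfold gamma; field; auto).
 split; [|split].
 - intro G1.
   assert (Ha1 : delta - 2 * (alpha - beta) <> 0) by (rewrite Hd, G1; lra).
   assert (Ha2 : delta - (alpha - beta) = 0) by (rewrite Hd, G1; ring).
   assert (I2v : is_RInt (fun s => exp ((delta - (alpha - beta)) * s + (alpha - beta) * T)) 0 T (T * X)).
   { rewrite Ha2. apply is_RInt_exp_z. }
   rewrite (EI _ _ (is_RInt_exp_nz _ _ T Ha1) I2v).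
   replace ((delta - 2 * (alpha - beta)) * T + 2 * (alpha - beta) * T) with (delta * T) by ring.
   rewrite HNe, HX2.
   assert (HXN : X = N) by (unfold X; rewrite <- HNe; f_equal; rewrite Hd, G1; ring).
   rewrite HXN, Hln. unfold C, mu, q. rewrite Hd, G1 in *. field; repeat split; try assumption; try lra.
 - intro G2.
   assert (Ha1 : delta - 2 * (alpha - beta) = 0) by (rewrite Hd, G2; ring).
   assert (Ha2 : delta - (alpha - beta) <> 0) by (rewrite Hd, G2; lra).
   assert (I1v : is_RInt (fun s => exp ((delta - 2 * (alpha - beta)) * s + 2 * (alpha - beta) * T)) 0 T (T * X ^ 2)).
   { rewrite Ha1, <- HX2. apply is_RInt_exp_z. }
   rewrite (EI _ _ I1v (is_RInt_exp_nz _ _ T Ha2)).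
   replace ((delta - (alpha - beta)) * T + (alpha - beta) * T) with (delta * T) by ring.
   rewrite HNe. fold X.
   assert (HNX : N = X ^ 2) by (rewrite <- HNe, <- HX2; f_equal; rewrite Hd, G2; ring).
   assert (R1 : Rpower N (-1/2) = / X).
   { unfold Rpower. rewrite Hln. unfold X. rewrite <- exp_Ropp. f_equal. rewrite Hd, G2. field. }
   rewrite R1, Hln. unfold C, mu, q. rewrite Hd, G2 in *. rewrite HNX. field; repeat split; try assumption; try lra.
 - intros G1 G2.
   assert (Ha1 : delta - 2 * (alpha - beta) <> 0).
   { rewrite Hd. intro E. apply G2. apply (Rmult_eq_reg_r (alpha - beta)); auto. lra. }
   assert (Ha2 : delta - (alpha - beta) <> 0).
   { rewrite Hd. intro E. apply G1. apply (Rmult_eq_reg_r (alpha - beta)); auto. lra. }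
   rewrite (EI _ _ (is_RInt_exp_nz _ _ T Ha1) (is_RInt_exp_nz _ _ T Ha2)).
   replace ((delta - 2 * (alpha - beta)) * T + 2 * (alpha - beta) * T) with (delta * T) by ring.
   replace ((delta - (alpha - beta)) * T + (alpha - beta) * T) with (delta * T) by ring.
   rewrite HNe, HX2. fold X.
   assert (HG0 : gamma <> 0) by (intro E; rewrite E in Hd; lra).
   assert (R1 : Rpower N (2 / gamma - 1) = X ^ 2 / N).
   { unfold Rpower. replace ((2 / gamma - 1) * ln N) with (2 * (alpha - beta) * T + - (delta * T)).
     - rewrite exp_plus, exp_Ropp, HNe, HX2. field; auto.
     - rewrite Hln, Hd. field. auto. }
   assert (R2 : Rpower N (1 / gamma - 1) = X / N).
   { unfold Rpower. replace ((1 / gamma - 1) * ln N) with ((alpha - beta) * T + - (delta * T)).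
     - rewrite exp_plus, exp_Ropp, HNe. unfold X. field; auto.
     - rewrite Hln, Hd. field. auto. }
   rewrite R1, R2. unfold C, mu, q.
   assert (2 - gamma <> 0) by (intro; apply G2; lra).
   assert (gamma - 1 <> 0) by (intro; apply G1; lra).
   assert (1 - gamma <> 0) by (intro; apply G1; lra).
   rewrite Hd in Ha1, Ha2 |- *. field; repeat split; try assumption; try lra.
Qed.
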